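(* Let $G$ be a maximal outerplanar graph with at least four vertices (with a fixed outerplanar embedding). Let $uv$ be an edge on the outer face of $G$ with $\deg_G(u)>2$ and $\deg_G(v)>2$, and let $w=\Delta(uv)$. Let $G_u=G_u(uv)$ and $G_v=G_v(uv)$ be the $uv$-segments. Then $$\mathrm{mvc}(G)=\min\{\mathrm{mvc}_{w}(G_u)+\mathrm{mvc}_{vw}(G_v)-1,\ \mathrm{mvc}_{uw}(G_u)+\mathrm{mvc}_{w}(G_v)-1,\ \mathrm{mvc}(G_u)+\mathrm{mvc}(G_v)\}.$$
   Context: All graphs are finite and simple. A maximal outerplanar graph is an outerplanar graph to which no edge between existing vertices can be added while keeping it outerplanar. A fixed outerplanar embedding, with all vertices on the outer face, is assumed. For $S\subseteq V(G)$, $\mathrm{mvc}_S(G)$ is the minimum size of a vertex cover of $G$ containing $S$, and $\mathrm{mvc}(G)=\mathrm{mvc}_\emptyset(G)$. Braces are dropped for small sets, e.g. $\mathrm{mvc}_{uw}(G)=\mathrm{mvc}_{\{u,w\}}(G)$. For a maximal outerplanar graph with at least three vertices and an edge $uv$ on its outer face, $\Delta(uv)$ denotes the unique common neighbor of $u$ and $v$. $uv$-segments: let $w=\Delta(uv)$. $G_u(uv)$ is the maximal biconnected outerplanar subgraph of $G$ that has $uw$ on its outer face and does not contain $v$. Equivalently, it is the subgraph induced by $u$, $w$ and the vertices lying on the side of the edge $uw$ that does not contain $v$. It is the single edge $uw$ if $\deg_G(u)=2$. $G_v(uv)$ is defined symmetrically with the roles of $u$ and $v$ exchanged. $G_u$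 and $G_v$ are themselves maximal outerplanar graphs with outer edges $uw$ and $vw$ respectively. *)

(* Defs.v *)
From mathcomp Require Import all_boot.
Set Implicit Arguments. Unset Strict Implicit. Unset Printing Implicit Defensive.

Definition simple_graph (T : finType) (e : rel T) :=
  symmetric e /\ irreflexive e.

Definition deg (T : finType) (e : rel T) (x : T) : nat := #|[set y | e x y]|.

Definition lbetween (a x b : nat) : bool := (minn a b < x) && (x < maxn a b).

(* chords {a,b} and {c,d} of a convex polygon (vertices at positions on a
   circle) cross: four distinct endpoints, exactly one of c,d strictly
   between a and b. *)
Definition cross (a b c d : nat) : bool :=
  uniq [:: a; b; c; d] && (lbetween a c b != lbetween a d b).

(* An outerplanar embedding: the vertices are placed injectively in cyclic
   order 0, 1, ..., #|T|-1 on a circle, edges are drawn as chords, and no two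
   edges cross. *)
Definition outer_embedding (T : finType) (e : rel T) (pos : T -> 'I_#|T|) :=
  injective pos /\
  forall x y x' y', e x y -> e x' y' ->
    ~~ cross (pos x) (pos y) (pos x') (pos y').

Definition outerplanar (T : finType) (e : rel T) :=
  exists pos : T -> 'I_#|T|, outer_embedding e pos.

Definition add_edge (T : finType) (e : rel T) (x y : T) : rel T :=
  fun a b => [|| e a b, (a == x) && (b == y) | (a == y) && (b == x)].

Definition maximal_outerplanar (T : finType) (e : rel T) :=
  outerplanar e /\
  forall x y, x != y -> ~~ e x y -> ~ outerplanar (add_edge e x y).

(* uv lies on the outer face of the fixed embedding: u and v are adjacent
   and occupy cyclically consecutive positions. *)
Definition outer_edge (T : finType) (e : rel T) (pos : T -> 'I_#|T|) (u v : T) :=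
  e u v /\
  (((pos u).+1 %% #|T| == pos v) || ((pos v).+1 %% #|T| == pos u)).

(* Vertex set of the segment G_u(uv) with w = Delta(uv): u, w and all
   vertices lying on the side of the chord uw not containing v. *)
Definition segment (T : finType) (pos : T -> 'I_#|T|) (u w v : T) : {set T} :=
  [set x | [|| x == u, x == w |
              lbetween (pos u) (pos x) (pos w) != lbetween (pos u) (pos v) (pos w)]].

Definition is_vc (T : finType) (e : rel T) (A C : {set T}) : bool :=
  (C \subset A) &&
  [forall x in A, forall y in A, e x y ==> (x \in C) || (y \in C)].

(* mvc_S(G[A]): minimum size of a vertex cover of G[A] containing S
   (A itself is a cover, so #|A| is a valid default). *)
Definition mvc (T : finType) (e : rel T) (A S : {set T}) : nat :=
  \big[minn/#|A|]_(C : {set T} | is_vc e A C && (S \subset C)) #|C|.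

(* Main.v *)
Require Import Defs.
From mathcomp Require Import all_boot zify.
Set Implicit Arguments. Unset Strict Implicit. Unset Printing Implicit Defensive.

Lemma lbP a x b : reflect ((a < x < b) \/ (b < x < a)) (lbetween a x b).
Proof. rewrite /lbetween; apply: (iffP andP); lia. Qed.
Lemma adjP n a b : a < n -> b < n -> ((a.+1 %% n == b) || (b.+1 %% n == a)) ->
  b = a.+1 \/ a = b.+1 \/ (a = n.-1 /\ b = 0) \/ (b = n.-1 /\ a = 0).
Proof.
move=> ha hb /orP[] /eqP <-.
  case: (ltnP a.+1 n) => h; first by rewrite modn_small; auto.
  have -> : a.+1 = n by lia. rewrite modnn; lia.
case: (ltnP b.+1 n) => h; first by rewrite modn_small; auto.
have -> : b.+1 = n by lia. rewrite modnn; lia.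
Qed.
Ltac lbcase := repeat match goal with |- context[lbetween ?a ?x ?b] => case: (lbP a x b) => ? end.
Lemma g_cov n a b c x : a < n -> b < n -> c < n -> x < n ->
  a != b -> a != c -> a != x -> b != c -> b != x -> c != x ->
  ((a.+1 %% n == b) || (b.+1 %% n == a)) ->
  (lbetween a x c != lbetween a b c) || (lbetween b x c != lbetween b a c).
Proof. move=> ha hb hc hx ? ? ? ? ? ? /(@adjP n a b ha hb) hadj. lbcase => //=; lia. Qed.
Lemma g_disj n a b c x : a < n -> b < n -> c < n -> x < n ->
  a != b -> a != c -> a != x -> b != c -> b != x -> c != x ->
  ((a.+1 %% n == b) || (b.+1 %% n == a)) ->
  ~~ ((lbetween a x c != lbetween a b c) && (lbetween b x c != lbetween b a c)).
Proof. move=> ha hb hc hx ? ? ? ? ? ? /(@adjP n a b ha hb) hadj. lbcase => //=; lia. Qed.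
Lemma g3 n a b c x y : a < n -> b < n -> c < n -> x < n -> y < n ->
  a != b -> a != c -> a != x -> b != c -> b != x -> c != x ->
  a != y -> b != y -> c != y -> x != y ->
  ((a.+1 %% n == b) || (b.+1 %% n == a)) ->
  (lbetween a x c != lbetween a b c) -> (lbetween b y c != lbetween b a c) ->
  cross x y a c.
Proof.
move=> ha hb hc hx hy ? ? ? ? ? ? ? ? ? ? /(@adjP n a b ha hb) hadj.
rewrite /cross /= !inE !negb_or. lbcase => //=; rewrite ?andbT; lia. Qed.
Lemma g4 n a b c y : a < n -> b < n -> c < n -> y < n ->
  a != b -> a != c -> b != c -> 
  a != y -> b != y -> c != y ->
  ((a.+1 %% n == b) || (b.+1 %% n == a)) ->
  (lbetween b y c != lbetween b a c) ->
  cross a y b c.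
Proof.
move=> ha hb hc hy ? ? ? ? ? ? /(@adjP n a b ha hb) hadj.
rewrite /cross /= !inE !negb_or. lbcase => //=; rewrite ?andbT; lia. Qed.
Lemma g5 n a b c x : a < n -> b < n -> c < n -> x < n ->
  a != b -> a != c -> b != c -> 
  a != x -> b != x -> c != x ->
  ((a.+1 %% n == b) || (b.+1 %% n == a)) ->
  (lbetween a x c != lbetween a b c) ->
  cross x b a c.
Proof.
move=> ha hb hc hx ? ? ? ? ? ? /(@adjP n a b ha hb) hadj.
rewrite /cross /= !inE !negb_or. lbcase => //=; rewrite ?andbT; lia. Qed.



Lemma is_vcP (T : finType) (e : rel T) (A C : {set T}) :
  reflect (C \subset A /\ forall x y, x \in A -> y \in A -> e x y -> x \in C \/ y \in C)
          (is_vc e A C).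
Proof.
apply: (iffP andP) => [[hs /forallP h]|[hs h]]; split => //.
  move=> x y xA yA exy; move: (h x); rewrite xA /= => /forallP /(_ y).
  by rewrite yA exy /= => /orP.
apply/forallP => x; apply/implyP => xA; apply/forallP => y; apply/implyP => yA.
by apply/implyP => /(h x y xA yA) [] ->; rewrite ?orbT.
Qed.

Lemma mvc_le (T : finType) (e : rel T) (A S C : {set T}) : is_vc e A C -> S \subset C -> mvc e A S <= #|C|.
Proof.
move=> hc hs; rewrite /mvc.
have : C \in index_enum {set T} by rewrite mem_index_enum.
elim: (index_enum {set T}) => [|k r IH] //=; rewrite big_cons in_cons.
case/orP => [/eqP <-| /IH h]; first by rewrite hc hs /= geq_minl.
by case: ifP => _ //; rewrite geq_min h orbT.
Qed.

Lemma mvc_ex (T : finType) (e : rel T) (A S : {set T}) : S \subset A ->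
  exists C, [/\ is_vc e A C, S \subset C & mvc e A S = #|C|].
Proof.
move=> hSA.
have : mvc e A S = #|A| \/ exists C, [/\ is_vc e A C, S \subset C & mvc e A S = #|C|].
  rewrite /mvc; apply: (big_ind (fun m => m = #|A| \/ exists C, [/\ is_vc e A C, S \subset C & m = #|C|])) => [|a b ha hb|C /andP[h1 h2]]; first by left.
    rewrite /minn; case: ifP => _; [case: ha => [->|[C [h1 h2 ->]]]; [by left | by right; exists C] | case: hb => [->|[C [h1 h2 ->]]]; [by left | by right; exists C]].
  by right; exists C.
case=> // h; exists A; split => //; apply/is_vcP; split => // x y xA yA _; by left.
Qed.



Definition split_ok (T : finType) (e : rel T) (A B : {set T}) (u v w : T) : Prop :=
 [/\ (symmetric e /\ irreflexive e) /\ (forall x, x \in A \/ x \in B),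
     (forall x, x \in A -> x \in B -> x = w),
     [/\ w \in A, w \in B, u \in A & v \in B], [/\ e u v, e u w & e v w] &
     (forall x y, e x y -> x \in A -> y \in B -> x != w -> y != w -> x = u /\ y = v)].

Lemma split_swap T e A B u v w : @split_ok T e A B u v w -> @split_ok T e B A v u w.
Proof.
case=> [[[sy ir] hc] hi [wA wB uA vB] [euv euw evw] hx]; split => //.
- split=> // x; case: (hc x); auto.
- by move=> x xB xA; apply: hi.
- by rewrite sy.
- by move=> x y exy xB yA xw yw; rewrite sy in exy; case: (hx y x exy yA xB yw xw).
Qed.

Lemma card_split T (A B Ca Cb : {set T}) w :
  (forall x, x \in A -> x \in B -> x = w) -> Ca \subset A -> Cb \subset B ->
  #|Ca :|: Cb| + ((w \in Ca) && (w \in Cb)) = #|Ca| + #|Cb|.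
Proof.
move=> hi sa sb; rewrite -cardsUI; congr (_ + _).
case h: ((w \in Ca) && (w \in Cb)).
  have -> : Ca :&: Cb = [set w]; last by rewrite cards1.
  apply/setP => x; rewrite !inE; apply/andP/eqP => [[xa xb]|->]; last by case/andP: h.
  by apply: hi; [apply: (subsetP sa) | apply: (subsetP sb)].
have -> : Ca :&: Cb = set0; last by rewrite cards0.
apply/setP => x; rewrite !inE; apply/negbTE/negP => /andP[xa xb].
have xw : x = w by apply: hi; [apply: (subsetP sa) | apply: (subsetP sb)].
by rewrite -xw xa xb in h.
Qed.

Lemma cover_union T e A B u v w (Ca Cb D : {set T}) : @split_ok T e A B u v w ->
  is_vc e A Ca -> is_vc e B Cb -> Ca \subset D -> Cb \subset D ->
  (u \in D) || (v \in D) -> is_vc e [set: T] D.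
Proof.
case=> [[[sy ir] hc] hi [wA wB uA vB] [euv euw evw] hx].
move=> /is_vcP [sa ca] /is_vcP [sb cb] sD1 sD2 huv.
apply/is_vcP; split; first exact: subsetT.
move=> x y _ _ exy.
have inD1 z : z \in Ca -> z \in D by move/(subsetP sD1).
have inD2 z : z \in Cb -> z \in D by move/(subsetP sD2).
case: (hc x) => xs; case: (hc y) => ys.
- by case: (ca x y xs ys exy); auto.
- have [xw|xw] := eqVneq x w.
    subst x; case: (cb w y wB ys exy); auto.
  have [yw|yw] := eqVneq y w.
    subst y; case: (ca x w xs wA exy); auto.
  case: (hx x y exy xs ys xw yw) => -> ->; by case/orP: huv; auto.
- have [xw|xw] := eqVneq x w.
    subst x; case: (ca w y wA ys exy); auto.
  have [yw|yw] := eqVneq y w.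
    subst y; case: (cb x w xs wB exy); auto.
  rewrite sy in exy.
  case: (hx y x exy ys xs yw xw) => -> ->; by case/orP: huv; auto.
- by case: (cb x y xs ys exy); auto.
Qed.


Lemma restr_vc T e A (C : {set T}) : is_vc e [set: T] C -> is_vc e A (C :&: A).
Proof.
move=> /is_vcP [_ h]; apply/is_vcP; split; first exact: subsetIr.
move=> x y xA yA exy; rewrite !inE xA yA !andbT.
by case: (h x y (in_setT x) (in_setT y) exy); auto.
Qed.

Lemma lower T e A B u v w : @split_ok T e A B u v w ->
  minn (minn (mvc e A [set w] + mvc e B [set v; w] - 1)
             (mvc e A [set u; w] + mvc e B [set w] - 1))
       (mvc e A set0 + mvc e B set0) <= mvc e [set: T] set0.
Proof.
move=> hs; have [[[sy ir] hc] hi [wA wB uA vB] [euv euw evw] hx] := hs.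
have [C [hC _ ->]] := mvc_ex e (sub0set [set: T]).
have hCA := restr_vc A hC; have hCB := restr_vc B hC.
have eqC : C = (C :&: A) :|: (C :&: B).
  by apply/setP => x; rewrite !inE; case: (hc x) => ->; rewrite ?andbT; case: (x \in C); rewrite ?andbF ?orbF ?orbT.
have hcard := card_split hi (subsetIr C A) (subsetIr C B).
rewrite -eqC !inE wA wB !andbT in hcard.
have le_sub (S : {set T}) (X : {set T}) : S \subset X -> X \subset C -> S \subset X :&: C.
  by move=> h1 h2; rewrite subsetI h1 (subset_trans h1 h2).
case wC : (w \in C); rewrite /= in hcard.
- have [uC|vC] : (u \in C) \/ (v \in C).
    by move/is_vcP: hC => [_ h]; apply: h => //; rewrite in_setT.
  + have h1 : mvc e A [set u; w] <= #|C :&: A|.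
      apply: mvc_le hCA _; apply/subsetP => x; rewrite !inE => /orP[] /eqP ->;
      by rewrite ?uC ?wC ?uA ?wA.
    have h2 : mvc e B [set w] <= #|C :&: B|.
      apply: mvc_le hCB _; apply/subsetP => x; rewrite !inE => /eqP ->;
      by rewrite ?wC ?wB.
    lia.
  + have h1 : mvc e B [set v; w] <= #|C :&: B|.
      apply: mvc_le hCB _; apply/subsetP => x; rewrite !inE => /orP[] /eqP ->;
      by rewrite ?vC ?wC ?vB ?wB.
    have h2 : mvc e A [set w] <= #|C :&: A|.
      apply: mvc_le hCA _; apply/subsetP => x; rewrite !inE => /eqP ->;
      by rewrite ?wC ?wA.
    lia.
- have h1 : mvc e A set0 <= #|C :&: A| by apply: mvc_le hCA (sub0set _).
  have h2 : mvc e B set0 <= #|C :&: B| by apply: mvc_le hCB (sub0set _).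
  lia.
Qed.

Lemma up1 T e A B u v w : @split_ok T e A B u v w ->
  mvc e [set: T] set0 <= mvc e A [set w] + mvc e B [set v; w] - 1.
Proof.
move=> hs; have [[[sy ir] hc] hi [wA wB uA vB] [euv euw evw] hx] := hs.
have sA : [set w] \subset A by rewrite sub1set.
have sB : [set v; w] \subset B by apply/subsetP => x; rewrite !inE => /orP[] /eqP ->.
have [Ca [hCa hSa ->]] := mvc_ex e sA.
have [Cb [hCb hSb ->]] := mvc_ex e sB.
have wCa : w \in Ca by apply: (subsetP hSa); rewrite inE.
have wCb : w \in Cb by apply: (subsetP hSb); rewrite !inE eqxx orbT.
have vCb : v \in Cb by apply: (subsetP hSb); rewrite !inE eqxx.
have hD := cover_union hs hCa hCb (subsetUl Ca Cb) (subsetUr Ca Cb).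
have hcard := card_split hi (proj1 (is_vcP _ _ _ hCa)) (proj1 (is_vcP _ _ _ hCb)).
rewrite wCa wCb /= in hcard.
have vD : (u \in Ca :|: Cb) || (v \in Ca :|: Cb) by rewrite !inE vCb !orbT.
have := mvc_le (hD vD) (sub0set _).
by rewrite -hcard addn1 subn1.
Qed.

Lemma up3 T e A B u v w : @split_ok T e A B u v w ->
  mvc e [set: T] set0 <= mvc e A set0 + mvc e B set0.
Proof.
move=> hs; have [[[sy ir] hc] hi [wA wB uA vB] [euv euw evw] hx] := hs.
have [Ca [hCa _ ->]] := mvc_ex e (sub0set A).
have [Cb [hCb _ ->]] := mvc_ex e (sub0set B).
have hcard := card_split hi (proj1 (is_vcP _ _ _ hCa)) (proj1 (is_vcP _ _ _ hCb)).
case huv: ((u \in Ca) || (v \in Cb)).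
  have hD := cover_union hs hCa hCb (subsetUl Ca Cb) (subsetUr Ca Cb).
  have vD : (u \in Ca :|: Cb) || (v \in Ca :|: Cb) by rewrite !inE; case/orP: huv => ->; rewrite ?orbT.
  have := mvc_le (hD vD) (sub0set _).
  move=> h; apply: (leq_trans h); rewrite -hcard; exact: leq_addr.
move/negbT: huv; rewrite negb_or => /andP[nu nv].
have wCa : w \in Ca.
  by case: (proj2 (is_vcP _ _ _ hCa) u w uA wA euw) => //; rewrite (negbTE nu).
have wCb : w \in Cb.
  by case: (proj2 (is_vcP _ _ _ hCb) v w vB wB evw) => //; rewrite (negbTE nv).
rewrite wCa wCb /= in hcard.
have sub1 : Ca \subset u |: (Ca :|: Cb) by apply: subset_trans (subsetUl Ca Cb) (subsetUr _ _).
have sub2 : Cb \subset u |: (Ca :|: Cb) by apply: subset_trans (subsetUr Ca Cb) (subsetUr _ _).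
have hD := cover_union hs hCa hCb sub1 sub2.
have vD : (u \in u |: (Ca :|: Cb)) || (v \in u |: (Ca :|: Cb)) by rewrite !inE eqxx.
have := mvc_le (hD vD) (sub0set _).
rewrite cardsU1 => h; apply: (leq_trans h).
by rewrite -hcard addn1 -add1n leq_add2r leq_b1.
Qed.


Lemma seg_split (T : finType) (e : rel T) (pos : T -> 'I_#|T|) (u v w : T) :
  simple_graph e -> outer_embedding e pos -> outer_edge e pos u v ->
  e u w -> e v w ->
  split_ok e (segment pos u w v) (segment pos v w u) u v w.
Proof.
move=> [sy ir] [inj nc] [euv adj] euw evw.
have ltn_pos z : pos z < #|T| by apply: ltn_ord.
have pne z1 z2 : z1 != z2 -> (pos z1 : nat) != pos z2.
  by move=> h; apply/negP => /eqP /val_inj /inj /eqP; apply/negP.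
have neq_e z1 z2 : e z1 z2 -> z1 != z2.
  by move=> h; apply/negP => /eqP hz; rewrite hz ir in h.
have uv := neq_e _ _ euv; have uw := neq_e _ _ euw; have vw := neq_e _ _ evw.
have puv := pne _ _ uv; have puw := pne _ _ uw; have pvw := pne _ _ vw.
have nIu : (lbetween (pos u) (pos v) (pos w) != lbetween (pos u) (pos v) (pos w)) = false by rewrite eqxx.
have nIv : (lbetween (pos v) (pos u) (pos w) != lbetween (pos v) (pos u) (pos w)) = false by rewrite eqxx.
have inter : forall x, x \in segment pos u w v -> x \in segment pos v w u -> x = w.
  move=> x; rewrite /segment !inE.
  have [->|xu] := eqVneq x u.
    move=> _ /or3P[/eqP h|/eqP h|] //; [by rewrite h eqxx in uv | by rewrite eqxx].
  have [->|xv] := eqVneq x v; first by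
    move=> /or3P[/eqP h|/eqP h|] //; rewrite eqxx.
  have [->//|xw] := eqVneq x w; rewrite /= => h1 h2.
  have ux : u != x by rewrite eq_sym.
  have vx : v != x by rewrite eq_sym.
  have wx : w != x by rewrite eq_sym.
  have := g_disj (ltn_pos u) (ltn_pos v) (ltn_pos w) (ltn_pos x) puv puw
     (pne _ _ ux) pvw (pne _ _ vx) (pne _ _ wx) adj.
  by rewrite h1 h2.
have third (a b c : bool) : [|| a, b | c] -> ~~ a -> ~~ b -> c by case: a; case: b.
have sym (z1 z2 : T) : z1 != z2 -> z2 != z1 by rewrite eq_sym.
split.
- split; first by [].
  move=> x; rewrite /segment !inE.
  have [->|xu] := eqVneq x u; first by left.
  have [->|xv] := eqVneq x v; first by right.
  have [->|xw] := eqVneq x w; first by left; rewrite orbT.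
  have := g_cov (ltn_pos u) (ltn_pos v) (ltn_pos w) (ltn_pos x) puv puw
     (pne _ _ (sym _ _ xu)) pvw (pne _ _ (sym _ _ xv)) (pne _ _ (sym _ _ xw)) adj.
  by case/orP => h; [left | right]; rewrite h !orbT.
- exact: inter.
- by rewrite /segment !inE !eqxx !orbT.
- by [].
move=> x y exy; rewrite /segment !inE => hx hy xw yw.
have xy := neq_e _ _ exy.
have [xu|xu] := eqVneq x u.
  subst x.
  have [yv|yv] := eqVneq y v; first by [].
  have Iy := third _ _ _ hy yv yw.
  have yu : y != u by apply: sym.
  have := g4 (ltn_pos u) (ltn_pos v) (ltn_pos w) (ltn_pos y) puv puw pvw
    (pne _ _ (sym _ _ yu)) (pne _ _ (sym _ _ yv)) (pne _ _ (sym _ _ yw)) adj Iy.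
  by move=> hc; move: (nc _ _ _ _ exy evw); rewrite hc.
have Ix := third _ _ _ hx xu xw.
have xv : x != v.
  by apply/negP => /eqP hxv; rewrite hxv eqxx in Ix.
have [yv|yv] := eqVneq y v.
  have := g5 (ltn_pos u) (ltn_pos v) (ltn_pos w) (ltn_pos x) puv puw pvw
    (pne _ _ (sym _ _ xu)) (pne _ _ (sym _ _ xv)) (pne _ _ (sym _ _ xw)) adj Ix.
  by move=> hc; move: (nc _ _ _ _ exy euw); rewrite yv hc.
have Iy := third _ _ _ hy yv yw.
have yu : y != u.
  by apply/negP => /eqP hyu; rewrite hyu eqxx in Iy.
have := g3 (ltn_pos u) (ltn_pos v) (ltn_pos w) (ltn_pos x) (ltn_pos y) puv puw
    (pne _ _ (sym _ _ xu)) pvw (pne _ _ (sym _ _ xv)) (pne _ _ (sym _ _ xw))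
    (pne _ _ (sym _ _ yu)) (pne _ _ (sym _ _ yv)) (pne _ _ (sym _ _ yw)) (pne _ _ xy) adj Ix Iy.
by move=> hc; move: (nc _ _ _ _ exy euw); rewrite hc.
Qed.


Theorem lemma1 (T : finType) (e : rel T) (pos : T -> 'I_#|T|) (u v w : T) :
  simple_graph e ->
  maximal_outerplanar e ->
  4 <= #|T| ->
  outer_embedding e pos ->
  outer_edge e pos u v ->
  2 < deg e u -> 2 < deg e v ->
  e u w -> e v w ->
  let Gu := segment pos u w v in
  let Gv := segment pos v w u in
  mvc e [set: T] set0 =
  minn (minn (mvc e Gu [set w] + mvc e Gv [set v; w] - 1)
             (mvc e Gu [set u; w] + mvc e Gv [set w] - 1))
       (mvc e Gu set0 + mvc e Gv set0).
Proof.
move=> sg _ _ emb oe _ _ euw evw Gu Gv.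
have hs : split_ok e Gu Gv u v w := seg_split sg emb oe euw evw.
apply/eqP; rewrite eqn_leq (lower hs) andbT !leq_min (up1 hs) (up3 hs) /= andbT.
by rewrite addnC; apply: (up1 (split_swap hs)).
Qed.
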